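(* Let $\mathcal H$ be a regular hypergraph with underlying graph $E$. Then $L_K(\mathcal H)$, together with the natural homomorphism $K(E)\to L_K(\mathcal H)$, is the universal localization of the path algebra $K(E)$ with respect to the set of homomorphisms of finitely generated projective right $K(E)$-modules $\sigma_h:\bigoplus_{j\in J_h}r(h)_jK(E)\to\bigoplus_{i\in I_h}s(h)_iK(E)$, $(a_j)_{j\in J_h}\mapsto\big(\sum_{j\in J_h}h_{ij}a_j\big)_{i\in I_h}$, for $h\in\mathcal H^1$.
   Context: $K$ is a field. A hypergraph $\mathcal H=(\mathcal H^0,\mathcal H^1,s,r)$: vertex set $\mathcal H^0$, hyperedge set $\mathcal H^1$, and for each $h$ nonempty index sets $I_h,J_h$ with families $s(h)=(s(h)_i)_{i\in I_h}$, $r(h)=(r(h)_j)_{j\in J_h}$ of vertices; regular means all $I_h,J_h$ finite. $L_K(\mathcal H)$ is the $K$-algebra generated by $\{v,h_{ij},h_{ij}^*\}$ subject to $uv=\delta_{u,v}u$; $s(h)_ih_{ij}=h_{ij}=h_{ij}r(h)_j$, $r(h)_jh_{ij}^*=h_{ij}^*=h_{ij}^*s(h)_i$; $\sum_{j\in J_h}h_{ij}h_{kj}^*=\delta_{ik}s(h)_i$; $\sum_{i\in I_h}h_{ij}^*h_{ik}=\delta_{jk}r(h)_j$. The underlying graph $E$ has $E^0=\mathcal H^0$, $E^1=\{h_{ij}\}$, $s(h_{ij})=s(h)_i$, $r(h_{ij})=r(h)_j$; $K(E)$ is its path algebra (free $K$-algebra on $E^0\cup E^1$ modulo $vw=\delta_{vw}v$,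 $s(e)e=e=er(e)$). The universal localization of an algebra $A$ with respect to a set $\Sigma$ of homomorphisms $\sigma:P_\sigma\to Q_\sigma$ between finitely generated projective $A$-modules is an algebra homomorphism $A\to\Sigma^{-1}A$ such that each $\sigma\otimes_A\mathrm{id}_{\Sigma^{-1}A}$ is an isomorphism, and which is initial among all algebra homomorphisms $f:A\to B$ such that each $\sigma\otimes_A\mathrm{id}_B$ is an isomorphism (every such $f$ factors uniquely through $A\to\Sigma^{-1}A$). *)

(* Defs.v *)
From HB Require Import structures.
From mathcomp Require Import all_boot all_algebra.
Set Implicit Arguments. Unset Strict Implicit. Unset Printing Implicit Defensive.
Import GRing.Theory.
Local Open Scope ring_scope.

(* Associative, not necessarily unital K-algebras (path algebras of graphs
   with infinitely many vertices are non-unital). *)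
Record nalg (K : fieldType) := NAlg {
  nalg_sort :> lmodType K;
  nmul : nalg_sort -> nalg_sort -> nalg_sort;
  nmulA : associative nmul;
  nmulDl : left_distributive nmul +%R;
  nmulDr : right_distributive nmul +%R;
  nmulZl : forall (a : K) (x y : nalg_sort), nmul (a *: x) y = a *: nmul x y;
  nmulZr : forall (a : K) (x y : nalg_sort), nmul x (a *: y) = a *: nmul x y }.
Arguments nmul {K} n _ _ : rename.

Definition nalg_hom (K : fieldType) (A B : nalg K) (f : A -> B) : Prop :=
  (forall (a : K) (x y : A), f (a *: x + y) = a *: f x + f y) /\
  (forall x y : A, f (nmul A x y) = nmul B (f x) (f y)).

(* Regular hypergraph: I_h = 'I_(hI h), J_h = 'I_(hJ h), finite and nonempty. *)
Record rhypergraph := RHyp {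
  hvert : Type;
  hedge : Type;
  hI : hedge -> nat;
  hJ : hedge -> nat;
  hI_gt0 : forall h, (0 < hI h)%N;
  hJ_gt0 : forall h, (0 < hJ h)%N;
  hs : forall h, 'I_(hI h) -> hvert;
  hr : forall h, 'I_(hJ h) -> hvert }.

Section Rel.
Variables (K : fieldType) (H : rhypergraph).

Definition vert_rel (A : nalg K) (pv : hvert H -> A) : Prop :=
  (forall u, nmul A (pv u) (pv u) = pv u) /\
  (forall u v, u <> v -> nmul A (pv u) (pv v) = 0).

Definition edge_fam (A : nalg K) :=
  forall h : hedge H, 'I_(hI h) -> 'I_(hJ h) -> A.

Definition path_rel (A : nalg K) (pv : hvert H -> A) (pe : edge_fam A) : Prop :=
  vert_rel pv /\
  forall h i j, nmul A (pv (hs i)) (pe h i j) = pe h i j /\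
                nmul A (pe h i j) (pv (hr j)) = pe h i j.

(* A, pv, pe is (a model of) K(E): the algebra presented by the generators and
   relations above (universal property of the free algebra modulo relations). *)
Definition is_path_algebra (A : nalg K) (pv : hvert H -> A) (pe : edge_fam A) :=
  path_rel pv pe /\
  forall (B : nalg K) (qv : hvert H -> B) (qe : edge_fam B),
    path_rel qv qe ->
    (exists g : A -> B, nalg_hom g /\ (forall v, g (pv v) = qv v) /\
                        (forall h i j, g (pe h i j) = qe h i j)) /\
    (forall g g' : A -> B, nalg_hom g -> nalg_hom g' ->
       (forall v, g (pv v) = g' (pv v)) ->
       (forall h i j, g (pe h i j) = g' (pe h i j)) ->
       forall x, g x = g' x).

Definition leavitt_rel (L : nalg K) (lv : hvert H -> L) (le les : edge_fam L) :=
  vert_rel lv /\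
  forall h,
    (forall i j, nmul L (lv (hs i)) (le h i j) = le h i j /\
                 nmul L (le h i j) (lv (hr j)) = le h i j /\
                 nmul L (lv (hr j)) (les h i j) = les h i j /\
                 nmul L (les h i j) (lv (hs i)) = les h i j) /\
    (forall i k : 'I_(hI h),
       \sum_(j < hJ h) nmul L (le h i j) (les h k j)
         = if i == k then lv (hs i) else 0) /\
    (forall j k : 'I_(hJ h),
       \sum_(i < hI h) nmul L (les h i j) (le h i k)
         = if j == k then lv (hr j) else 0).

Definition is_leavitt_algebra (L : nalg K) (lv : hvert H -> L)
    (le les : edge_fam L) :=
  leavitt_rel lv le les /\
  forall (B : nalg K) (qv : hvert H -> B) (qe qes : edge_fam B),
    leavitt_rel qv qe qes ->
    (exists g : L -> B, nalg_hom g /\ (forall v, g (lv v) = qv v) /\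
        (forall h i j, g (le h i j) = qe h i j) /\
        (forall h i j, g (les h i j) = qes h i j)) /\
    (forall g g' : L -> B, nalg_hom g -> nalg_hom g' ->
       (forall v, g (lv v) = g' (lv v)) ->
       (forall h i j, g (le h i j) = g' (le h i j)) ->
       (forall h i j, g (les h i j) = g' (les h i j)) ->
       forall x, g x = g' x).

Definition in_rideal (B : nalg K) (e x : B) : Prop := exists y, x = nmul B e y.

(* sigma_h (x) id_B is an isomorphism, for every h, where g : A -> B.
   Under the canonical identification  r A (x)_A B = g(r) B  (r idempotent),
   sigma_h (x) id_B is the map
     (+)_j g(r(h)_j) B -> (+)_i g(s(h)_i) B,  (b_j) |-> (sum_j g(h_ij) b_j)_i. *)
Definition sigma_inverting (A : nalg K) (pv : hvert H -> A) (pe : edge_fam A)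
    (B : nalg K) (g : A -> B) : Prop :=
  forall h : hedge H,
    (forall b b' : 'I_(hJ h) -> B,
       (forall j, in_rideal (g (pv (hr j))) (b j)) ->
       (forall j, in_rideal (g (pv (hr j))) (b' j)) ->
       (forall i, \sum_(j < hJ h) nmul B (g (pe h i j)) (b j)
                = \sum_(j < hJ h) nmul B (g (pe h i j)) (b' j)) ->
       forall j, b j = b' j) /\
    (forall c : 'I_(hI h) -> B,
       (forall i, in_rideal (g (pv (hs i))) (c i)) ->
       exists b : 'I_(hJ h) -> B,
         (forall j, in_rideal (g (pv (hr j))) (b j)) /\
         (forall i, \sum_(j < hJ h) nmul B (g (pe h i j)) (b j) = c i)).

Definition is_univ_loc (A : nalg K) (pv : hvert H -> A) (pe : edge_fam A)
    (L : nalg K) (f : A -> L) : Prop :=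
  nalg_hom f /\ sigma_inverting pv pe f /\
  forall (B : nalg K) (g : A -> B), nalg_hom g -> sigma_inverting pv pe g ->
    (exists k : L -> B, nalg_hom k /\ forall x, k (f x) = g x) /\
    (forall k k' : L -> B, nalg_hom k -> nalg_hom k' ->
       (forall x, k (f x) = g x) -> (forall x, k' (f x) = g x) ->
       forall y, k y = k' y).

End Rel.

(* Main.v *)
Require Import Defs.
From mathcomp Require Import all_boot all_algebra.
From Stdlib Require Import ClassicalEpsilon FunctionalExtensionality.
Set Implicit Arguments. Unset Strict Implicit. Unset Printing Implicit Defensive.
Import GRing.Theory.
Local Open Scope ring_scope.

Section Gen.
Variables (K : fieldType) (A : nalg K).
Lemma nmul0l (x : A) : nmul A 0 x = 0.
Proof.
have h := @nmulDl _ A 0 0 x. rewrite addr0 in h.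
have h2 := congr1 (fun t => t - nmul A 0 x) h. simpl in h2.
by rewrite subrr addrK in h2.
Qed.
Lemma nmul0r (x : A) : nmul A x 0 = 0.
Proof.
have h := @nmulDr _ A x 0 0. rewrite addr0 in h.
have h2 := congr1 (fun t => t - nmul A x 0) h. simpl in h2.
by rewrite subrr addrK in h2.
Qed.
Lemma nmul_suml n (F : 'I_n -> A) x :
  nmul A (\sum_(i < n) F i) x = \sum_(i < n) nmul A (F i) x.
Proof.
apply: (big_morph (fun y => nmul A y x)); last exact: nmul0l.
by move=> a b; exact: nmulDl.
Qed.
Lemma nmul_sumr n (F : 'I_n -> A) x :
  nmul A x (\sum_(i < n) F i) = \sum_(i < n) nmul A x (F i).
Proof.
apply: (big_morph (fun y => nmul A x y)); last exact: nmul0r.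
by move=> a b; exact: nmulDr.
Qed.
Lemma sum_swap n m (X : 'I_n -> A) (Y : 'I_n -> 'I_m -> A) (Z : 'I_m -> A) :
  \sum_(i < n) nmul A (X i) (\sum_(k < m) nmul A (Y i k) (Z k)) =
  \sum_(k < m) nmul A (\sum_(i < n) nmul A (X i) (Y i k)) (Z k).
Proof.
under eq_bigr => i _ do rewrite nmul_sumr.
under [RHS]eq_bigr => k _ do rewrite nmul_suml.
rewrite exchange_big /=. apply: eq_bigr => k _; apply: eq_bigr => i _.
by rewrite nmulA.
Qed.
Lemma sum_delta_l n (i : 'I_n) (v : A) (Z : 'I_n -> A) :
  \sum_(k < n) nmul A (if i == k then v else 0) (Z k) = nmul A v (Z i).
Proof.
rewrite (bigD1 i) //= eqxx big1 ?addr0 // => k hk.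
by rewrite eq_sym (negbTE hk) nmul0l.
Qed.
Lemma sum_delta_r n (k : 'I_n) (V X : 'I_n -> A) :
  \sum_(j < n) nmul A (X j) (if j == k then V j else 0) = nmul A (X k) (V k).
Proof.
rewrite (bigD1 k) //= eqxx big1 ?addr0 // => j hj.
by rewrite (negbTE hj) nmul0r.
Qed.

Variables (B : nalg K) (g : A -> B) (hg : nalg_hom g).
Lemma hom_add x y : g (x + y) = g x + g y.
Proof. by have := hg.1 1 x y; rewrite !scale1r. Qed.
Lemma hom0 : g 0 = 0.
Proof. by have := hg.1 (-1) 0 0; rewrite scaler0 addr0 scaleN1r addNr. Qed.
Lemma hom_sum n (F : 'I_n -> A) : g (\sum_(i < n) F i) = \sum_(i < n) g (F i).
Proof. apply: (big_morph g); [exact: hom_add | exact: hom0]. Qed.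
Lemma hom_mul x y : g (nmul A x y) = nmul B (g x) (g y).
Proof. exact: hg.2. Qed.
Lemma hom_if (b : bool) x : g (if b then x else 0) = if b then g x else 0.
Proof. by case: b; rewrite ?hom0. Qed.
End Gen.

Lemma hom_comp (K : fieldType) (A B C : nalg K) (f : A -> B) (g : B -> C) :
  nalg_hom f -> nalg_hom g -> nalg_hom (fun x => g (f x)).
Proof.
move=> hf hg; split => [a x y|x y]; first by rewrite hf.1 hg.1.
by rewrite hf.2 hg.2.
Qed.

Lemma leav_inv (K : fieldType) (H : rhypergraph) (A B : nalg K) (pv : hvert H -> A)
  (pe : edge_fam H A) (g : A -> B) (qes : edge_fam H B) :
  leavitt_rel (fun v => g (pv v)) (fun h i j => g (pe h i j)) qes ->
  sigma_inverting pv pe g.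
Proof.
rewrite /leavitt_rel /vert_rel /=.
case=> [[idem orth] hh] h.
have [hrel [s1 s2]] := hh h.
split.
- move=> b b' hb hb' heq j.
  have rec : forall c : 'I_(hJ h) -> B,
      (forall j, in_rideal (g (pv (hr j))) (c j)) ->
      c j = \sum_(i < hI h) nmul B (qes h i j)
              (\sum_(k < hJ h) nmul B (g (pe h i k)) (c k)).
    move=> c hc. rewrite sum_swap.
    under eq_bigr => k _ do rewrite s2.
    rewrite sum_delta_l. case: (hc j) => y ->. by rewrite nmulA idem.
  rewrite (rec b hb) (rec b' hb'); apply: eq_bigr => i _; by rewrite heq.
- move=> c hc. exists (fun j => \sum_(i < hI h) nmul B (qes h i j) (c i)). split.
  + move=> j. exists (\sum_(i < hI h) nmul B (qes h i j) (c i)).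
    rewrite nmul_sumr. apply: eq_bigr => i _. by rewrite nmulA (hrel i j).2.2.1.
  + move=> i /=. rewrite sum_swap.
    under eq_bigr => k _ do rewrite s1.
    rewrite sum_delta_l. case: (hc i) => y ->. by rewrite nmulA idem.
Qed.

Theorem mainTheorem15 (K : fieldType) (H : rhypergraph)
    (A : nalg K) (pv : hvert H -> A) (pe : edge_fam H A)
    (L : nalg K) (lv : hvert H -> L) (le les : edge_fam H L)
    (phi : A -> L) :
  is_path_algebra pv pe ->
  is_leavitt_algebra lv le les ->
  nalg_hom phi ->
  (forall v, phi (pv v) = lv v) ->
  (forall h i j, phi (pe h i j) = le h i j) ->
  is_univ_loc pv pe phi.
Proof.
move=> [hPr hPu] [hLr hLu] hphi hpv hpe.
have Ev : (fun v => phi (pv v)) = lv := functional_extensionality _ _ hpv.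
have Ee : (fun h i j => phi (pe h i j)) = le.
  apply: functional_extensionality_dep => h.
  do 2 (apply: functional_extensionality => ?); exact: hpe.
have [[pidem porth] hPe] := hPr.
have [_ hLh] := hLr.
split; first exact: hphi.
split.
  apply: (leav_inv (qes := les)). by rewrite Ev Ee.
move=> B g hg hinv.
have gidem u : nmul B (g (pv u)) (g (pv u)) = g (pv u)
  by rewrite -(hom_mul hg) pidem.
have gorth u v : u <> v -> nmul B (g (pv u)) (g (pv v)) = 0
  by move=> nuv; rewrite -(hom_mul hg) porth // (hom0 hg).
have gPe h i j : nmul B (g (pv (hs i))) (g (pe h i j)) = g (pe h i j) /\
                 nmul B (g (pe h i j)) (g (pv (hr j))) = g (pe h i j)
  by rewrite -!(hom_mul hg) (hPe h i j).1 (hPe h i j).2.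
have grel : path_rel (fun v => g (pv v)) (fun h i j => g (pe h i j))
  by split; [split|].
have hsurj h (k : 'I_(hI h)) : exists b : 'I_(hJ h) -> B,
    (forall j, in_rideal (g (pv (hr j))) (b j)) /\
    (forall i, \sum_(j < hJ h) nmul B (g (pe h i j)) (b j)
               = if i == k then g (pv (hs i)) else 0).
  apply: (hinv h).2 => i. case: (i == k).
  - by exists (g (pv (hs i))); rewrite gidem.
  - by exists 0; rewrite nmul0r.
pose qes : edge_fam H B := fun h k =>
  proj1_sig (constructive_indefinite_description _ (hsurj h k)).
have qesP h k : (forall j, in_rideal (g (pv (hr j))) (qes h k j)) /\
    (forall i, \sum_(j < hJ h) nmul B (g (pe h i j)) (qes h k j)
               = if i == k then g (pv (hs i)) else 0)
  := proj2_sig (constructive_indefinite_description _ (hsurj h k)).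
have inj h := (hinv h).1.
have qrel : leavitt_rel (fun v => g (pv v)) (fun h i j => g (pe h i j)) qes.
  split; first by split.
  move=> h /=. split; [move=> i j | split].
  - have [hr1 _] := qesP h i.
    split; first exact: (gPe h i j).1.
    split; first exact: (gPe h i j).2.
    split.
      case: (hr1 j) => y ->; by rewrite nmulA gidem.
    apply: (inj h (fun j => nmul B (qes h i j) (g (pv (hs i)))) (qes h i)) => [j'|j'|l].
    + case: (hr1 j') => y ->. exists (nmul B y (g (pv (hs i)))). by rewrite nmulA.
    + exact: hr1.
    + rewrite /=. under eq_bigr => j' _ do rewrite nmulA.
      rewrite -nmul_suml (qesP h i).2.
      case: eqP => [->|_]; [by rewrite gidem | by rewrite nmul0l].
  - move=> i k. exact: (qesP h k).2 i.
  - move=> j k.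
    apply: (inj h (fun j => \sum_(i < hI h) nmul B (qes h i j) (g (pe h i k)))
                  (fun j => if j == k then g (pv (hr j)) else 0)) => [j'|j'|l] /=.
    + exists (\sum_(i < hI h) nmul B (qes h i j') (g (pe h i k))).
      rewrite nmul_sumr; apply: eq_bigr => i _. rewrite nmulA.
      have [hr1 _] := qesP h i. case: (hr1 j') => y ->. by rewrite nmulA gidem.
    + case: (j' == k); [by exists (g (pv (hr j'))); rewrite gidem
                       | by exists 0; rewrite nmul0r].
    + rewrite (sum_delta_r k (fun j => g (pv (hr j)))).
      rewrite (sum_swap (fun j => g (pe h l j)) (fun j i => qes h i j)
                        (fun i => g (pe h i k))).
      under eq_bigr => i _ do rewrite (qesP h i).2.
      rewrite sum_delta_l.
      by rewrite (gPe h l k).1 (gPe h l k).2.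
have [[k [hk [hkv [hke hkes]]]] hLuniq] := hLu B _ _ _ qrel.
have kphi : forall x, k (phi x) = g x.
  apply: ((hPu B _ _ grel).2 (fun x => k (phi x)) g) => //.
  - exact: hom_comp.
  - by move=> v; rewrite hpv hkv.
  - by move=> h i j; rewrite hpe hke.
split; first by exists k; split.
move=> k1 k2 hk1 hk2 e1 e2.
have key (k0 : L -> B) : nalg_hom k0 -> (forall x, k0 (phi x) = g x) ->
    forall h i j, k0 (les h i j) = qes h i j.
  move=> hk0 e0 h i. apply: (inj h) => [j|j|l] /=.
  - exists (k0 (les h i j)).
    by rewrite -e0 hpv -(hom_mul hk0) ((hLh h).1 i j).2.2.1.
  - exact: (qesP h i).1.
  - rewrite (qesP h i).2.
    under eq_bigr => j _ do rewrite -e0 hpe -(hom_mul hk0).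
    by rewrite -(hom_sum hk0) ((hLh h).2.1 l i) (hom_if hk0) -hpv e0.
apply: hLuniq => //.
- by move=> v; rewrite -hpv e1 e2.
- by move=> h i j; rewrite -hpe e1 e2.
- by move=> h i j; rewrite (key k1) ?(key k2).
Qed.
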